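(* Let $R=\{r_{ab}\}_{N\times N}$ be the transition rate matrix of an irreducible continuous-time Markov jump process on states $\{1,\dots,N\}$: for $a\neq b$, $r_{ab}\ge 0$ is the rate of jumps from $b$ to $a$, and $r_{bb}=-\sum_{a\neq b} r_{ab}$. For a complex number $\omega$ with $\operatorname{Re}\omega>0$, let $\hat{P}(\omega)=\int_0^\infty e^{-\omega t}e^{Rt}\,\mathrm{d}t$ (the Laplace transform of the transition probability matrix). Fix distinct states $i\neq j$ and regard $R$ (hence $\hat P(\omega)$) as a function of the single off-diagonal rate $r_{ij}>0$, with all other off-diagonal rates fixed and $r_{jj}=-\sum_{a\neq j}r_{aj}$ adjusted accordingly. For $m=1,2$, let $a^{(m)}_l$ ($l=1,\dots,N$) and $b^{(m)}_{kl}$ ($k\neq l$, $(k,l)\neq(i,j)$) be coefficients not depending on $r_{ij}$ (defining observables that do not count transitions $j\to i$), and set $c^{(m)}_l=a^{(m)}_l+\sum_{k\neq l,\ (k,l)\neq(i,j)} b^{(m)}_{kl}\,r_{kl}$. Define $$\hat\chi_{ij}^{(1)(2)}(\omega)=\frac{\sum_l c^{(1)}_l\left[\hat P_{li}(\omega)-\hat P_{lj}(\omega)\right]}{\sum_l c^{(2)}_l\left[\hat P_{li}(\omega)-\hat P_{lj}(\omega)\right]}.$$ Then for $\operatorname{Re}\omega>0$, at every value of $r_{ij}$ where the denominator is nonzero, $\frac{\mathrm{d}\hat\chi_{ij}^{(1)(2)}(\omega)}{\mathrm{d}r_{ij}}=0$.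
   Context: $\hat\chi_{ij}^{(1)(2)}(\omega)$ is the ratio of the responses to $r_{ij}$ of the Laplace transforms $\hat Q_m(\omega)=\int_0^\infty e^{-\omega\tau}\langle Q_m(\tau)\rangle\,\mathrm{d}\tau$ of the observables $Q_m=\sum_l a^{(m)}_l\tau_l(\tau)+\sum_{k\neq l,(k,l)\neq(i,j)} b^{(m)}_{kl}n_{kl}(\tau)$, where $\tau_l(\tau)$ is the time spent in state $l$ up to time $\tau$ and $n_{kl}(\tau)$ the number of jumps $l\to k$ up to time $\tau$, for the process relaxing from an arbitrary fixed initial distribution under time-independent rates. *)

(* Defs.v *)
From Stdlib Require Import Reals Arith Relations Bool.
From Coquelicot Require Import Coquelicot.
Open Scope R_scope.

(* States are the naturals 0 .. N-1 (the paper's 1 .. N). *)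

Fixpoint sumR (n : nat) (f : nat -> R) : R :=
  match n with O => 0 | S n' => sumR n' f + f n' end.

Definition mat := nat -> nat -> R.

Definition mid : mat := fun a b => if Nat.eqb a b then 1 else 0.

Definition mmul (N : nat) (A B : mat) : mat :=
  fun a b => sumR N (fun k => A a k * B k b).

Fixpoint mpow (N : nat) (A : mat) (n : nat) : mat :=
  match n with O => mid | S n' => mmul N A (mpow N A n') end.

Definition expm (N : nat) (A : mat) (t : R) : mat :=
  fun a b => Series (fun n => mpow N A n a b * t ^ n / INR (fact n)).

(* off-diagonal rates: q a b = rate of jumps b -> a.  The rate r_ij is
   replaced by the value x, all other off-diagonal rates come from r0. *)
Definition offrate (r0 : mat) (i j : nat) (x : R) : mat :=
  fun a b => if Nat.eqb a i && Nat.eqb b j then x else r0 a b.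

Definition rate_matrix (N : nat) (q : mat) : mat :=
  fun a b => if Nat.eqb a b
             then - sumR N (fun c => if Nat.eqb c b then 0 else q c b)
             else q a b.

Definition step (N : nat) (Rm : mat) (x y : nat) : Prop :=
  (x < N)%nat /\ (y < N)%nat /\ x <> y /\ 0 < Rm y x.

Definition irreducible (N : nat) (Rm : mat) : Prop :=
  forall a b, (a < N)%nat -> (b < N)%nat -> clos_refl_trans nat (step N Rm) a b.

Definition cexp_neg (w : C) (t : R) : C :=
  (exp (- Re w * t) * cos (Im w * t), - (exp (- Re w * t) * sin (Im w * t))).

Definition Phat (N : nat) (Rm : mat) (w : C) (a b : nat) : C :=
  @RInt_gen C_R_CompleteNormedModule
           (fun t => Cmult (cexp_neg w t) (RtoC (expm N Rm t a b)))
           (at_point 0) (Rbar_locally p_infty).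

Fixpoint sumC (n : nat) (f : nat -> C) : C :=
  match n with O => RtoC 0 | S n' => Cplus (sumC n' f) (f n') end.

Definition coef (N : nat) (r0 : mat) (i j : nat) (a : nat -> R) (b : mat) (l : nat) : R :=
  a l + sumR N (fun k => if Nat.eqb k l || (Nat.eqb k i && Nat.eqb l j) then 0
                         else b k l * r0 k l).

Definition response (N : nat) (r0 : mat) (i j : nat) (a : nat -> R) (b : mat)
  (w : C) (x : R) : C :=
  sumC N (fun l => Cmult (RtoC (coef N r0 i j a b l))
     (Cminus (Phat N (rate_matrix N (offrate r0 i j x)) w l i)
             (Phat N (rate_matrix N (offrate r0 i j x)) w l j))).

Definition chi_hat (N : nat) (r0 : mat) (i j : nat) (a1 a2 : nat -> R) (b1 b2 : mat)
  (w : C) (x : R) : C :=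
  Cdiv (response N r0 i j a1 b1 w x) (response N r0 i j a2 b2 w x).

(* Main.v *)
Require Import Defs.
From Stdlib Require Import Reals Arith Relations Lia Lra Bool.
From Coquelicot Require Import Coquelicot.
Open Scope R_scope.


Lemma sumR_ext n f g : (forall k, (k < n)%nat -> f k = g k) -> sumR n f = sumR n g.
Proof.
  induction n; simpl; intros H; auto.
  rewrite IHn by (intros; apply H; lia). rewrite H by lia. auto.
Qed.

Lemma sumR_plus n f g : sumR n (fun k => f k + g k) = sumR n f + sumR n g.
Proof. induction n; simpl; [lra|]. rewrite IHn; ring. Qed.

Lemma sumR_minus n f g : sumR n (fun k => f k - g k) = sumR n f - sumR n g.
Proof. induction n; simpl; [lra|]. rewrite IHn; ring. Qed.

Lemma sumR_scal_l n c f : sumR n (fun k => c * f k) = c * sumR n f.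
Proof. induction n; simpl; [ring|]. rewrite IHn; ring. Qed.

Lemma sumR_scal_r n c f : sumR n (fun k => f k * c) = sumR n f * c.
Proof. induction n; simpl; [ring|]. rewrite IHn; ring. Qed.

Lemma sumR_0 n : sumR n (fun _ => 0) = 0.
Proof. induction n; simpl; [ring|]. rewrite IHn; ring. Qed.

Lemma sumR_swap n m f :
  sumR n (fun k => sumR m (fun l => f k l)) = sumR m (fun l => sumR n (fun k => f k l)).
Proof.
  induction n; simpl.
  - rewrite sumR_0; auto.
  - rewrite IHn, <- sumR_plus; auto.
Qed.

Lemma sumR_delta n a f : (a < n)%nat ->
  sumR n (fun k => if Nat.eqb k a then f k else 0) = f a.
Proof.
  induction n; intros Ha; [lia|]. simpl.
  destruct (Nat.eq_dec a n) as [->|Hne].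
  - rewrite Nat.eqb_refl.
    rewrite (sumR_ext n _ (fun _ => 0)), sumR_0; [ring|].
    intros k Hk. destruct (Nat.eqb_spec k n); [lia|auto].
  - rewrite IHn by lia. destruct (Nat.eqb_spec n a); [lia|ring].
Qed.

Lemma sumR_delta' n a f : (a < n)%nat ->
  sumR n (fun k => if Nat.eqb a k then f k else 0) = f a.
Proof.
  intros Ha. rewrite <- (sumR_delta n a f Ha). apply sumR_ext; intros k _.
  rewrite Nat.eqb_sym; auto.
Qed.

Lemma sumR_le n f g : (forall k, (k < n)%nat -> f k <= g k) -> sumR n f <= sumR n g.
Proof.
  induction n; simpl; intros H; [lra|].
  assert (sumR n f <= sumR n g) by (apply IHn; intros; apply H; lia).
  specialize (H n ltac:(lia)). lra.
Qed.

Lemma sumR_nonneg n f : (forall k, (k < n)%nat -> 0 <= f k) -> 0 <= sumR n f.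
Proof.
  intros H. rewrite <- (sumR_0 n). apply sumR_le; auto.
Qed.

Lemma sumR_abs n f : Rabs (sumR n f) <= sumR n (fun k => Rabs (f k)).
Proof.
  induction n; simpl.
  - rewrite Rabs_R0; lra.
  - eapply Rle_trans; [apply Rabs_triang|]. lra.
Qed.

Lemma sumR_single_le n f k : (forall l, (l < n)%nat -> 0 <= f l) -> (k < n)%nat ->
  f k <= sumR n f.
Proof.
  induction n; intros H Hk; [lia|]. simpl.
  destruct (Nat.eq_dec k n) as [->|Hne].
  - assert (0 <= sumR n f) by (apply sumR_nonneg; intros; apply H; lia). lra.
  - assert (f k <= sumR n f) by (apply IHn; [intros; apply H; lia | lia]).
    specialize (H n ltac:(lia)). lra.
Qed.

Definition alpha (N : nat) (A : mat) : R :=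
  sumR N (fun a => sumR N (fun b => Rabs (A a b))).

Lemma alpha_nonneg N A : 0 <= alpha N A.
Proof. apply sumR_nonneg; intros; apply sumR_nonneg; intros; apply Rabs_pos. Qed.

Lemma row_le_alpha N A a : (a < N)%nat -> sumR N (fun k => Rabs (A a k)) <= alpha N A.
Proof.
  intros Ha. unfold alpha.
  apply (sumR_single_le N (fun a => sumR N (fun b => Rabs (A a b)))); auto.
  intros; apply sumR_nonneg; intros; apply Rabs_pos.
Qed.

Lemma col_le_alpha N A b : (b < N)%nat -> sumR N (fun k => Rabs (A k b)) <= alpha N A.
Proof.
  intros Hb. unfold alpha. rewrite sumR_swap.
  apply (sumR_single_le N (fun b => sumR N (fun a => Rabs (A a b)))); auto.
  intros; apply sumR_nonneg; intros; apply Rabs_pos.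
Qed.

Lemma entry_le_alpha N A a b : (a < N)%nat -> (b < N)%nat -> Rabs (A a b) <= alpha N A.
Proof.
  intros Ha Hb. eapply Rle_trans; [|apply (row_le_alpha N A a Ha)].
  apply (sumR_single_le N (fun k => Rabs (A a k))); auto. intros; apply Rabs_pos.
Qed.

Lemma mpow_bound N A n a b : (a < N)%nat -> (b < N)%nat ->
  Rabs (mpow N A n a b) <= alpha N A ^ n.
Proof.
  revert a b. induction n; intros a b Ha Hb; simpl.
  - unfold mid. destruct (Nat.eqb a b); rewrite ?Rabs_R1, ?Rabs_R0; lra.
  - unfold mmul. eapply Rle_trans; [apply sumR_abs|].
    eapply Rle_trans.
    + apply (sumR_le _ _ (fun k => Rabs (A a k) * alpha N A ^ n)).
      intros k Hk. rewrite Rabs_mult. apply Rmult_le_compat_l; [apply Rabs_pos|].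
      apply IHn; auto.
    + rewrite sumR_scal_r. apply Rmult_le_compat_r.
      * apply pow_le, alpha_nonneg.
      * apply row_le_alpha; auto.
Qed.

Lemma mpow_S_r N A n a b : (a < N)%nat -> (b < N)%nat ->
  mpow N A (S n) a b = sumR N (fun k => mpow N A n a k * A k b).
Proof.
  revert a b. induction n; intros a b Ha Hb.
  - simpl. unfold mmul, mid.
    rewrite (sumR_ext N _ (fun k => if Nat.eqb k b then A a k else 0)).
    2:{ intros k _. destruct (Nat.eqb k b); ring. }
    rewrite sumR_delta by auto.
    rewrite (sumR_ext N _ (fun k => if Nat.eqb a k then A k b else 0)).
    2:{ intros k _. destruct (Nat.eqb a k); ring. }
    rewrite sumR_delta' by auto. auto.
  - change (mpow N A (S (S n)) a b) with (sumR N (fun k => A a k * mpow N A (S n) k b)).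
    rewrite (sumR_ext N _ (fun k => sumR N (fun l => A a k * (mpow N A n k l * A l b)))).
    2:{ intros k Hk. rewrite IHn by auto. rewrite sumR_scal_l; auto. }
    rewrite sumR_swap. apply sumR_ext; intros l Hl.
    change (mpow N A (S n) a l) with (sumR N (fun k => A a k * mpow N A n k l)).
    rewrite <- sumR_scal_r. apply sumR_ext; intros; ring.
Qed.

Definition ecoef N A a b (n : nat) : R := mpow N A n a b / INR (fact n).

Lemma expm_PSeries N A t a b : expm N A t a b = PSeries (ecoef N A a b) t.
Proof.
  unfold expm, PSeries, ecoef. apply Series_ext; intros n.
  field. apply INR_fact_neq_0.
Qed.

Lemma term_le_exp y n : 0 <= y -> y ^ n / INR (fact n) <= exp y.
Proof.
  intros Hy. eapply Rle_trans; [|apply (exp_ge_taylor y n Hy)].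
  destruct n; simpl; [lra|].
  assert (0 <= sum_f_R0 (fun k => y ^ k / INR (fact k)) n).
  { apply cond_pos_sum. intros k. apply Rmult_le_pos; [apply pow_le; auto|].
    apply Rlt_le, Rinv_0_lt_compat, INR_fact_lt_0. }
  simpl in H. lra.
Qed.

Lemma ecoef_bound N A a b x n : (a < N)%nat -> (b < N)%nat ->
  Rabs (ecoef N A a b n * x ^ n) <= exp (alpha N A * Rabs x).
Proof.
  intros Ha Hb. eapply Rle_trans; [|apply (term_le_exp _ n)].
  2:{ apply Rmult_le_pos; [apply alpha_nonneg|apply Rabs_pos]. }
  unfold ecoef. rewrite Rpow_mult_distr.
  assert (Hf : 0 < INR (fact n)) by apply INR_fact_lt_0.
  rewrite Rabs_mult, Rabs_div by lra. rewrite (Rabs_right (INR (fact n))) by lra.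
  rewrite <- RPow_abs.
  unfold Rdiv. rewrite Rmult_assoc, (Rmult_comm (/ _)), <- Rmult_assoc.
  apply Rmult_le_compat_r; [apply Rlt_le, Rinv_0_lt_compat; auto|].
  apply Rmult_le_compat_r; [apply pow_le, Rabs_pos|].
  apply mpow_bound; auto.
Qed.

Lemma ecoef_radius N A a b : (a < N)%nat -> (b < N)%nat ->
  CV_radius (ecoef N A a b) = p_infty.
Proof.
  intros Ha Hb.
  destruct (CV_radius_bounded (ecoef N A a b)) as [Hub _].
  assert (Hin : forall r : R, Rbar_le r (CV_radius (ecoef N A a b))).
  { intros r. apply Hub. exists (exp (alpha N A * Rabs r)). intros n.
    apply ecoef_bound; auto. }
  destruct (CV_radius (ecoef N A a b)) as [r| |] eqn:E; auto.
  - specialize (Hin (r + 1)). simpl in Hin. lra.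
  - specialize (Hin 0). simpl in Hin. contradiction.
Qed.

Lemma expm_abs_series N A t a b : (a < N)%nat -> (b < N)%nat ->
  ex_series (fun n => Rabs (ecoef N A a b n * t ^ n)).
Proof.
  intros Ha Hb. apply CV_disk_inside. rewrite ecoef_radius by auto. exact I.
Qed.

Lemma expm_ex_series N A t a b : (a < N)%nat -> (b < N)%nat ->
  ex_series (fun n => mpow N A n a b * t ^ n / INR (fact n)).
Proof.
  intros Ha Hb. eapply ex_series_ext.
  2: apply ex_series_Rabs, (expm_abs_series N A t a b Ha Hb).
  intros n; simpl. unfold ecoef. field. apply INR_fact_neq_0.
Qed.

Lemma is_series_sumR n (f : nat -> nat -> R) :
  (forall k, (k < n)%nat -> ex_series (f k)) ->
  is_series (fun m => sumR n (fun k => f k m)) (sumR n (fun k => Series (f k))).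
Proof.
  induction n; intros H; simpl.
  - eapply is_series_ext; [|apply (is_pseries_0 (fun _ : nat => 0))].
    intros m. simpl. unfold scal; simpl. unfold mult; simpl. ring.
  - apply (is_series_plus (fun m => sumR n (fun k => f k m)) (f n)).
    + apply IHn; intros; apply H; lia.
    + apply Series_correct, H; lia.
Qed.

Lemma Series_sumR n (f : nat -> nat -> R) :
  (forall k, (k < n)%nat -> ex_series (f k)) ->
  Series (fun m => sumR n (fun k => f k m)) = sumR n (fun k => Series (f k)).
Proof. intros H. apply is_series_unique, is_series_sumR; auto. Qed.

Lemma fact_S_INR n : INR (fact (S n)) = INR (S n) * INR (fact n).
Proof. rewrite fact_simpl, mult_INR; auto. Qed.

Lemma expm_deriv_l N A (t : R) a b : (a < N)%nat -> (b < N)%nat ->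
  is_derive (fun t => expm N A t a b) t (sumR N (fun k => A a k * expm N A t k b)).
Proof.
  intros Ha Hb.
  eapply is_derive_ext. { intro s. symmetry. apply expm_PSeries. }
  replace (sumR N (fun k => A a k * expm N A t k b))
    with (PSeries (PS_derive (ecoef N A a b)) t).
  { apply is_derive_PSeries. rewrite ecoef_radius by auto. exact I. }
  unfold PSeries, PS_derive.
  rewrite (Series_ext _ (fun n => sumR N (fun k => A a k * (mpow N A n k b * t ^ n / INR (fact n))))).
  2:{ intros n. unfold ecoef. simpl (mpow N A (S n)). unfold mmul.
      rewrite (sumR_ext N (fun k => A a k * (mpow N A n k b * t ^ n / INR (fact n)))
                (fun k => (A a k * mpow N A n k b) * (t ^ n / INR (fact n)))).
      2:{ intros; unfold Rdiv; ring. }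
      rewrite sumR_scal_r, fact_S_INR. field.
      split; [apply INR_fact_neq_0| apply not_0_INR; lia]. }
  rewrite Series_sumR.
  2:{ intros k Hk. eapply ex_series_ext.
      2: apply ex_series_scal_l with (c := A a k), (expm_ex_series N A t k b); auto.
      intros n; simpl. unfold scal; simpl; unfold mult; simpl. ring. }
  apply sumR_ext; intros k Hk. rewrite Series_scal_l. unfold expm; auto.
Qed.

Lemma expm_deriv_r N A (t : R) a b : (a < N)%nat -> (b < N)%nat ->
  is_derive (fun t => expm N A t a b) t (sumR N (fun k => expm N A t a k * A k b)).
Proof.
  intros Ha Hb.
  eapply is_derive_ext. { intro s. symmetry. apply expm_PSeries. }
  replace (sumR N (fun k => expm N A t a k * A k b))
    with (PSeries (PS_derive (ecoef N A a b)) t).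
  { apply is_derive_PSeries. rewrite ecoef_radius by auto. exact I. }
  unfold PSeries, PS_derive.
  rewrite (Series_ext _ (fun n => sumR N (fun k => (mpow N A n a k * t ^ n / INR (fact n)) * A k b))).
  2:{ intros n. unfold ecoef. rewrite mpow_S_r by auto.
      rewrite (sumR_ext N (fun k => (mpow N A n a k * t ^ n / INR (fact n)) * A k b)
                (fun k => (mpow N A n a k * A k b) * (t ^ n / INR (fact n)))).
      2:{ intros; unfold Rdiv; ring. }
      rewrite sumR_scal_r, fact_S_INR. field.
      split; [apply INR_fact_neq_0| apply not_0_INR; lia]. }
  rewrite Series_sumR.
  2:{ intros k Hk. eapply ex_series_ext.
      2: apply ex_series_scal_l with (c := A k b), (expm_ex_series N A t a k); auto.
      intros n; simpl. unfold scal; simpl; unfold mult; simpl. ring. }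
  apply sumR_ext; intros k Hk. rewrite Series_scal_r. unfold expm; auto.
Qed.

Lemma expm_0 N A a b : expm N A 0 a b = mid a b.
Proof.
  rewrite expm_PSeries, PSeries_0. unfold ecoef. simpl. field.
Qed.

Lemma expm_cont N A (t : R) a b : (a < N)%nat -> (b < N)%nat ->
  continuous (fun t => expm N A t a b) t.
Proof.
  intros Ha Hb. apply (ex_derive_continuous (K:=R_AbsRing) (V:=R_NormedModule)). eexists. apply expm_deriv_l; auto.
Qed.

Definition ratem (N : nat) (A : mat) : Prop :=
  (forall a b, (a < N)%nat -> (b < N)%nat -> a <> b -> 0 <= A a b) /\
  (forall b, (b < N)%nat -> sumR N (fun a => A a b) = 0).

Lemma is_derive_sumR n (f : nat -> R -> R) (df : nat -> R) (t : R) :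
  (forall k, (k < n)%nat -> is_derive (f k) t (df k)) ->
  is_derive (fun s => sumR n (fun k => f k s)) t (sumR n df).
Proof.
  induction n; intros H; simpl.
  - exact (is_derive_const (K:=R_AbsRing) (V:=R_NormedModule) 0 t).
  - apply (is_derive_plus (fun s => sumR n (fun k => f k s)) (f n)).
    + apply IHn; intros; apply H; lia.
    + apply H; lia.
Qed.

Lemma is_derive_Rmult (f g : R -> R) (x df dg : R) :
  is_derive f x df -> is_derive g x dg ->
  is_derive (fun t => f t * g t) x (df * g x + f x * dg).
Proof.
  intros H1 H2. apply (is_derive_mult f g x df dg H1 H2).
  intros; apply Rmult_comm.
Qed.

Lemma is_derive_expc (c t : R) : is_derive (fun s => exp (c * s)) t (c * exp (c * t)).
Proof. auto_derive; auto. ring. Qed.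

Lemma nonincr (h dh : R -> R) (t : R) :
  (forall s, is_derive h s (dh s)) -> (forall s, dh s <= 0) -> 0 <= t -> h t <= h 0.
Proof.
  intros Hd Hneg Ht. destruct (Req_dec t 0) as [->|Hne]; [lra|].
  destruct (MVT_gen h 0 t dh) as [c [Hc Heq]].
  - intros; apply Hd.
  - intros x _. apply continuity_pt_filterlim.
    apply (ex_derive_continuous (K:=R_AbsRing) (V:=R_NormedModule)). eexists; apply Hd.
  - specialize (Hneg c). nra.
Qed.

Lemma Series_zero : Series (fun _ : nat => 0) = 0.
Proof.
  apply is_series_unique.
  eapply is_series_ext; [|apply (is_pseries_0 (fun _ : nat => 0))].
  intros m. simpl. unfold scal; simpl. unfold mult; simpl. ring.
Qed.

Lemma colsum N A b t : ratem N A -> (b < N)%nat -> 0 <= t ->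
  sumR N (fun a => expm N A t a b) = 1.
Proof.
  intros [_ Hcol] Hb Ht.
  assert (H0 : sumR N (fun a => expm N A 0 a b) = 1).
  { rewrite (sumR_ext N _ (fun a => if Nat.eqb a b then 1 else 0)).
    - rewrite (sumR_delta N b (fun _ => 1)); auto.
    - intros a _. rewrite expm_0. unfold mid. auto. }
  destruct (Req_dec t 0) as [->|Hne]; auto.
  rewrite <- H0. symmetry.
  apply (eq_is_derive (fun s => sumR N (fun a => expm N A s a b))); [|lra].
  intros s _.
  replace (@zero R_NormedModule) with (sumR N (fun a => sumR N (fun k => A a k * expm N A s k b))).
  - apply is_derive_sumR. intros a Ha. apply expm_deriv_l; auto.
  - rewrite sumR_swap.
    rewrite (sumR_ext N _ (fun k => 0)).
    + apply sumR_0.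
    + intros k Hk. rewrite sumR_scal_r, Hcol by auto. ring.
Qed.

Definition Bm (N : nat) (A : mat) : mat :=
  fun a b => A a b + (if Nat.eqb a b then alpha N A else 0).

Lemma Bm_nonneg N A a b : ratem N A -> (a < N)%nat -> (b < N)%nat -> 0 <= Bm N A a b.
Proof.
  intros [Hoff _] Ha Hb. unfold Bm.
  destruct (Nat.eqb_spec a b) as [->|Hne].
  - pose proof (entry_le_alpha N A b b Hb Hb). pose proof (Rabs_maj2 (A b b)). lra.
  - pose proof (Hoff a b Ha Hb Hne). lra.
Qed.

Lemma mpow_nonneg N M n a b : (forall a b, (a < N)%nat -> (b < N)%nat -> 0 <= M a b) ->
  (a < N)%nat -> (b < N)%nat -> 0 <= mpow N M n a b.
Proof.
  intros HM. revert a b. induction n; intros a b Ha Hb; simpl.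
  - unfold mid. destruct (Nat.eqb a b); lra.
  - unfold mmul. apply sumR_nonneg. intros k Hk. apply Rmult_le_pos; auto.
Qed.

Lemma expm_nonneg N M t a b : (forall a b, (a < N)%nat -> (b < N)%nat -> 0 <= M a b) ->
  0 <= t -> (a < N)%nat -> (b < N)%nat -> 0 <= expm N M t a b.
Proof.
  intros HM Ht Ha Hb. unfold expm. rewrite <- Series_zero.
  apply Series_le.
  - intros n. split; [lra|]. apply Rmult_le_pos.
    + apply Rmult_le_pos; [apply mpow_nonneg; auto|apply pow_le; auto].
    + apply Rlt_le, Rinv_0_lt_compat, INR_fact_lt_0.
  - apply expm_ex_series; auto.
Qed.

Definition Gm N A (t : R) (a b : nat) : R := exp (- alpha N A * t) * expm N (Bm N A) t a b.

Lemma Gm_deriv N A (t : R) a b : (a < N)%nat -> (b < N)%nat ->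
  is_derive (fun s => Gm N A s a b) t (sumR N (fun k => A a k * Gm N A t k b)).
Proof.
  intros Ha Hb. unfold Gm.
  eapply is_derive_ext. { intros s. reflexivity. }
  pose proof (is_derive_Rmult _ _ t _ _ (is_derive_expc (- alpha N A) t)
               (expm_deriv_l N (Bm N A) t a b Ha Hb)) as H.
  replace (sumR N (fun k => A a k * (exp (- alpha N A * t) * expm N (Bm N A) t k b)))
    with (- alpha N A * exp (- alpha N A * t) * expm N (Bm N A) t a b +
          exp (- alpha N A * t) * sumR N (fun k => Bm N A a k * expm N (Bm N A) t k b)).
  { exact H. }
  rewrite (sumR_ext N (fun k => Bm N A a k * expm N (Bm N A) t k b)
             (fun k => A a k * expm N (Bm N A) t k b +
                       (if Nat.eqb a k then alpha N A * expm N (Bm N A) t k b else 0))).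
  2:{ intros k _. unfold Bm at 1. destruct (Nat.eqb a k); ring. }
  rewrite sumR_plus, sumR_delta' by auto.
  rewrite (sumR_ext N (fun k => A a k * (exp (- alpha N A * t) * expm N (Bm N A) t k b))
             (fun k => exp (- alpha N A * t) * (A a k * expm N (Bm N A) t k b))).
  2:{ intros; ring. }
  rewrite sumR_scal_l. ring.
Qed.

Lemma quad_bound N A (x : nat -> R) :
  Rabs (sumR N (fun a => x a * sumR N (fun k => A a k * x k)))
  <= alpha N A * sumR N (fun a => x a * x a).
Proof.
  eapply Rle_trans; [apply sumR_abs|].
  eapply Rle_trans.
  { apply (sumR_le _ _ (fun a => sumR N (fun k => Rabs (A a k) * ((x a * x a + x k * x k) / 2)))).
    intros a Ha. rewrite Rabs_mult.
    eapply Rle_trans.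
    { apply Rmult_le_compat_l; [apply Rabs_pos|apply sumR_abs]. }
    rewrite <- sumR_scal_l. apply sumR_le. intros k Hk.
    rewrite Rabs_mult.
    assert (Hq : Rabs (x a) * Rabs (x k) <= (x a * x a + x k * x k) / 2).
    { rewrite <- Rabs_mult. apply Rabs_le.
      pose proof (Rle_0_sqr (x a + x k)). pose proof (Rle_0_sqr (x a - x k)).
      unfold Rsqr in *. split; nra. }
    pose proof (Rabs_pos (A a k)). nra. }
  rewrite (sumR_ext N _ (fun a => sumR N (fun k => Rabs (A a k) * (x a * x a)) / 2 +
                                   sumR N (fun k => Rabs (A a k) * (x k * x k)) / 2)).
  2:{ intros a _. unfold Rdiv. rewrite <- !sumR_scal_r, <- sumR_plus. apply sumR_ext; intros; ring. }
  rewrite sumR_plus. unfold Rdiv. rewrite !sumR_scal_r.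
  rewrite (sumR_swap N N (fun a k => Rabs (A a k) * (x k * x k))).
  assert (H1 : sumR N (fun a => sumR N (fun k => Rabs (A a k) * (x a * x a)))
               <= alpha N A * sumR N (fun a => x a * x a)).
  { rewrite <- sumR_scal_l. apply sumR_le. intros a Ha.
    rewrite sumR_scal_r. apply Rmult_le_compat_r; [nra|].
    apply row_le_alpha; auto. }
  assert (H2 : sumR N (fun k => sumR N (fun a => Rabs (A a k) * (x k * x k)))
               <= alpha N A * sumR N (fun a => x a * x a)).
  { rewrite <- sumR_scal_l. apply sumR_le. intros k Hk.
    rewrite sumR_scal_r. apply Rmult_le_compat_r; [nra|].
    apply col_le_alpha; auto. }
  lra.
Qed.

Lemma expm_eq_Gm N A t a b : (a < N)%nat -> (b < N)%nat -> 0 <= t ->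
  expm N A t a b = Gm N A t a b.
Proof.
  intros Ha Hb Ht.
  set (D := fun (s : R) (a : nat) => expm N A s a b - Gm N A s a b).
  assert (HD : forall s a, (a < N)%nat ->
            is_derive (fun s => D s a) s (sumR N (fun k => A a k * D s k))).
  { intros s a' Ha'. unfold D.
    replace (sumR N (fun k => A a' k * (expm N A s k b - Gm N A s k b)))
      with (minus (sumR N (fun k => A a' k * expm N A s k b))
                  (sumR N (fun k => A a' k * Gm N A s k b))).
    - apply (is_derive_minus (fun s => expm N A s a' b) (fun s => Gm N A s a' b)).
      + apply expm_deriv_l; auto.
      + apply Gm_deriv; auto.
    - unfold minus, plus, opp; simpl. rewrite <- Rminus_def, <- sumR_minus. apply sumR_ext; intros; ring. }
  set (f := fun s => sumR N (fun a => D s a * D s a)).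
  set (df := fun s => sumR N (fun a => sumR N (fun k => A a k * D s k) * D s a + D s a * sumR N (fun k => A a k * D s k))).
  assert (Hf : forall s, is_derive f s (df s)).
  { intros s. unfold f, df. apply is_derive_sumR. intros a' Ha'.
    apply (is_derive_Rmult (fun s => D s a') (fun s => D s a')); apply HD; auto. }
  assert (Hdf : forall s, df s <= 2 * alpha N A * f s).
  { intros s. unfold df, f.
    rewrite (sumR_ext N _ (fun a => 2 * (D s a * sumR N (fun k => A a k * D s k)))) by (intros; ring).
    rewrite sumR_scal_l.
    pose proof (quad_bound N A (D s)). pose proof (Rle_abs (sumR N (fun a => D s a * sumR N (fun k => A a k * D s k)))).
    lra. }
  set (h := fun s => exp (- (2 * alpha N A) * s) * f s).
  assert (Hh : h t <= h 0).
  { apply (nonincr h (fun s => - (2 * alpha N A) * exp (- (2 * alpha N A) * s) * f s + exp (- (2 * alpha N A) * s) * df s)); auto.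
    - intros s. unfold h. apply (is_derive_Rmult (fun s => exp (- (2 * alpha N A) * s)) f).
      + apply is_derive_expc.
      + apply Hf.
    - intros s. pose proof (exp_pos (- (2 * alpha N A) * s)). pose proof (Hdf s). nra. }
  assert (Hf0 : f 0 = 0).
  { unfold f. transitivity (sumR N (fun _ => 0)); [|apply sumR_0]. apply sumR_ext. intros a' Ha'.
    unfold D, Gm; cbv beta. rewrite !expm_0. rewrite Rmult_0_r, exp_0. ring. }
  assert (Hfpos : forall s, 0 <= f s).
  { intros s. unfold f. apply sumR_nonneg. intros; apply Rle_0_sqr. }
  assert (Hft : f t = 0).
  { unfold h in Hh. rewrite Hf0, Rmult_0_r in Hh.
    pose proof (exp_pos (- (2 * alpha N A) * t)). pose proof (Hfpos t). nra. }
  assert (HDa : D t a * D t a <= f t).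
  { unfold f. apply (sumR_single_le N (fun a => D t a * D t a)); auto.
    intros; apply Rle_0_sqr. }
  unfold D in HDa. nra.
Qed.

Lemma expm_bounds N A t a b : ratem N A -> (a < N)%nat -> (b < N)%nat -> 0 <= t ->
  0 <= expm N A t a b <= 1.
Proof.
  intros HA Ha Hb Ht.
  assert (Hpos : forall a, (a < N)%nat -> 0 <= expm N A t a b).
  { intros a' Ha'. rewrite expm_eq_Gm by auto. unfold Gm.
    apply Rmult_le_pos; [apply Rlt_le, exp_pos|].
    apply expm_nonneg; auto. intros; apply Bm_nonneg; auto. }
  split; auto.
  rewrite <- (colsum N A b t HA Hb Ht).
  apply (sumR_single_le N (fun a => expm N A t a b)); auto.
Qed.

Lemma cont_plus (f g : R -> R) x : continuous f x -> continuous g x ->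
  continuous (fun t => f t + g t) x.
Proof. intros; apply (continuous_plus (U:=R_UniformSpace) (K:=R_AbsRing) (V:=R_NormedModule) f g x); auto. Qed.

Lemma cont_mult (f g : R -> R) x : continuous f x -> continuous g x ->
  continuous (fun t => f t * g t) x.
Proof. intros; apply (continuous_mult (U:=R_UniformSpace) (K:=R_AbsRing) f g x); auto. Qed.

Lemma cont_const (c : R) x : continuous (fun _ : R => c) x.
Proof. apply (continuous_const (U:=R_UniformSpace) (V:=R_UniformSpace)). Qed.

Lemma cont_sumR n (f : nat -> R -> R) x : (forall k, (k < n)%nat -> continuous (f k) x) ->
  continuous (fun t => sumR n (fun k => f k t)) x.
Proof.
  induction n; intros H; simpl.
  - apply cont_const.
  - apply (cont_plus (fun t => sumR n (fun k => f k t)) (f n));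
      [apply IHn; intros; apply H; lia | apply H; lia].
Qed.

Lemma cont_of_derive (f : R -> R) x l : is_derive f x l -> continuous f x.
Proof.
  intros H. apply (ex_derive_continuous (K:=R_AbsRing) (V:=R_NormedModule)). eexists; eauto.
Qed.

Lemma RInt_plusR (f g : R -> R) a b : ex_RInt f a b -> ex_RInt g a b ->
  RInt (fun t => f t + g t) a b = RInt f a b + RInt g a b.
Proof. intros H1 H2. exact (RInt_plus f g a b H1 H2). Qed.

Lemma RInt_scalR (f : R -> R) c a b : ex_RInt f a b ->
  RInt (fun t => c * f t) a b = c * RInt f a b.
Proof. intros H. exact (RInt_scal f a b c H). Qed.

Lemma ex_RInt_cont (f : R -> R) a b : (forall t, continuous f t) -> ex_RInt f a b.
Proof. intros H. apply (ex_RInt_continuous (V:=R_CompleteNormedModule)). intros; apply H. Qed.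

Lemma RInt_sumR n (f : nat -> R -> R) a b : (forall k, (k < n)%nat -> forall t, continuous (f k) t) ->
  RInt (fun t => sumR n (fun k => f k t)) a b = sumR n (fun k => RInt (f k) a b).
Proof.
  induction n; intros H; simpl.
  - rewrite RInt_const. unfold scal; simpl; unfold mult; simpl. ring.
  - rewrite (RInt_plusR (fun t => sumR n (fun k => f k t)) (f n)).
    + rewrite IHn; [auto | intros; apply H; lia].
    + apply ex_RInt_cont. intros t. apply cont_sumR. intros; apply H; lia.
    + apply ex_RInt_cont. apply H; lia.
Qed.

Lemma is_lim_sumR n (f : nat -> R -> R) (l : nat -> R) (x : Rbar) :
  (forall k, (k < n)%nat -> is_lim (f k) x (l k)) ->
  is_lim (fun t => sumR n (fun k => f k t)) x (sumR n l).
Proof.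
  induction n; intros H; simpl.
  - apply is_lim_const.
  - apply (is_lim_plus' (fun t => sumR n (fun k => f k t)) (f n)).
    + apply IHn; intros; apply H; lia.
    + apply H; lia.
Qed.

Lemma exp_small (s eps : R) : 0 < s -> 0 < eps ->
  exists M, 0 <= M /\ forall u, M < u -> exp (- s * u) < eps.
Proof.
  intros Hs He. exists (Rmax 0 (- ln eps / s)). split; [apply Rmax_l|].
  intros u Hu. rewrite <- (exp_ln eps He). apply exp_increasing.
  assert (- ln eps / s < u) by (eapply Rle_lt_trans; [apply Rmax_r|]; exact Hu).
  assert (Hs' : - ln eps < s * u).
  { apply (Rmult_lt_compat_l s) in H; auto. unfold Rdiv in H.
    replace (s * (- ln eps * / s)) with (- ln eps) in H by (field; lra). lra. }
  lra.
Qed.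

Lemma RInt_expneg (s u v : R) : s <> 0 ->
  RInt (fun t => exp (- s * t)) u v = (exp (- s * u) - exp (- s * v)) / s.
Proof.
  intros Hs.
  apply is_RInt_unique.
  replace ((exp (- s * u) - exp (- s * v)) / s)
    with (minus ((fun t => - exp (- s * t) / s) v) ((fun t => - exp (- s * t) / s) u)).
  2:{ unfold minus, plus, opp; simpl. field; auto. }
  apply (is_RInt_derive (V:=R_CompleteNormedModule) (fun t => - exp (- s * t) / s) (fun t => exp (- s * t))).
  - intros x _. auto_derive; auto. field; auto.
  - intros x _. apply (cont_of_derive _ x (- s * exp (- s * x))).
    auto_derive; auto. ring.
Qed.

Lemma lap_exists (s : R) (f : R -> R) : 0 < s -> (forall t, continuous f t) ->
  (forall t, 0 <= t -> Rabs (f t) <= exp (- s * t)) ->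
  exists l : R, is_lim (fun T => RInt f 0 T) p_infty l.
Proof.
  intros Hs Hc Hb.
  pose proof (@filterlim_locally_closely R R_CompleteSpace (Rbar_locally p_infty)
                (Rbar_locally_filter p_infty) (fun T => RInt f 0 T)) as HLC.
  cut (exists l : R, filterlim (fun T => RInt f 0 T) (Rbar_locally p_infty) (locally l)).
  { intros [l Hl]; exists l; exact Hl. }
  apply HLC.
  apply filterlim_closely.
  intros eps.
  destruct (exp_small s (s * eps) Hs) as [M [HM0 HM]].
  { apply Rmult_lt_0_compat; auto. apply cond_pos. }
  exists (fun T => M < T). split.
  { exists M. auto. }
  assert (Key : forall u v, M < u -> u <= v -> Rabs (RInt f 0 v - RInt f 0 u) < eps).
  { intros u v Hu Huv.
    assert (Hch := RInt_Chasles f 0 u v (ex_RInt_cont f 0 u Hc) (ex_RInt_cont f u v Hc)).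
    change (RInt f 0 u + RInt f u v = RInt f 0 v) in Hch.
    replace (RInt f 0 v - RInt f 0 u) with (RInt f u v) by lra.
    eapply Rle_lt_trans; [apply abs_RInt_le; auto; apply ex_RInt_cont; auto|].
    eapply Rle_lt_trans.
    { apply (RInt_le _ (fun t => exp (- s * t))); auto.
      - apply (ex_RInt_norm f). apply ex_RInt_cont; auto.
      - apply ex_RInt_cont. intros t. apply (cont_of_derive _ t (- s * exp (- s * t))).
        auto_derive; auto. ring.
      - intros x Hx. apply Hb. lra. }
    rewrite RInt_expneg by lra.
    pose proof (HM u Hu). pose proof (exp_pos (- s * v)).
    apply (Rmult_lt_reg_l s); auto. unfold Rdiv.
    replace (s * ((exp (- s * u) - exp (- s * v)) * / s)) with (exp (- s * u) - exp (- s * v)) by (field; lra).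
    lra. }
  intros u v Hu Hv.
  change (Rabs (RInt f 0 v - RInt f 0 u) < eps).
  destruct (Rle_dec u v).
  - apply Key; auto.
  - rewrite Rabs_minus_sym. apply Key; auto; lra.
Qed.

Lemma lim_zero (s : R) (g : R -> R) : 0 < s ->
  (forall t, 0 <= t -> Rabs (g t) <= exp (- s * t)) -> is_lim g p_infty 0.
Proof.
  intros Hs Hb P [eps HP].
  destruct (exp_small s eps Hs (cond_pos eps)) as [M [HM0 HM]].
  exists M. intros x Hx. apply HP.
  change (Rabs (g x - 0) < eps). rewrite Rminus_0_r.
  eapply Rle_lt_trans; [apply Hb; lra|]. apply HM; auto.
Qed.

Lemma lapgen (p P1 P2 : R -> R) (H : nat -> R -> R) (c1 c2 : R) (beta : nat -> R) (n : nat)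
  (L1 L2 : R) (Lk : nat -> R) :
  (forall t, is_derive p t (c1 * P1 t + c2 * P2 t + sumR n (fun k => beta k * H k t))) ->
  (forall t, continuous P1 t) -> (forall t, continuous P2 t) ->
  (forall k, (k < n)%nat -> forall t, continuous (H k) t) ->
  is_lim p p_infty 0 ->
  is_lim (fun T => RInt P1 0 T) p_infty L1 ->
  is_lim (fun T => RInt P2 0 T) p_infty L2 ->
  (forall k, (k < n)%nat -> is_lim (fun T => RInt (H k) 0 T) p_infty (Lk k)) ->
  - p 0 = c1 * L1 + c2 * L2 + sumR n (fun k => beta k * Lk k).
Proof.
  intros Hd HP1 HP2 HH Hp HL1 HL2 HLk.
  set (df := fun t => c1 * P1 t + c2 * P2 t + sumR n (fun k => beta k * H k t)).
  assert (Hcd : forall t, continuous df t).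
  { intros t. unfold df. apply cont_plus; [apply cont_plus|].
    - apply cont_mult; [apply cont_const|auto].
    - apply cont_mult; [apply cont_const|auto].
    - apply (cont_sumR n (fun k t => beta k * H k t)). intros k Hk.
      apply cont_mult; [apply cont_const|auto]. }
  assert (Heq : forall T, p T - p 0 =
             c1 * RInt P1 0 T + c2 * RInt P2 0 T + sumR n (fun k => beta k * RInt (H k) 0 T)).
  { intros T.
    assert (HI : is_RInt df 0 T (minus (p T) (p 0))).
    { apply (is_RInt_derive (V:=R_CompleteNormedModule) p df).
      - intros; apply Hd.
      - intros; apply Hcd. }
    apply (is_RInt_unique (V:=R_CompleteNormedModule)) in HI. change (RInt df 0 T = p T - p 0) in HI.
    rewrite <- HI. unfold df.
    rewrite RInt_plusR; [| apply ex_RInt_cont; intros; apply cont_plus;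
                           apply cont_mult; auto; apply cont_const
                         | apply ex_RInt_cont; intros;
                           apply (cont_sumR n (fun k t => beta k * H k t)); intros;
                           apply cont_mult; auto; apply cont_const].
    rewrite RInt_plusR; [| apply ex_RInt_cont; intros; apply cont_mult; auto; apply cont_const
                         | apply ex_RInt_cont; intros; apply cont_mult; auto; apply cont_const].
    rewrite !RInt_scalR by (apply ex_RInt_cont; auto).
    rewrite (RInt_sumR n (fun k t => beta k * H k t)).
    2:{ intros; apply cont_mult; auto; apply cont_const. }
    f_equal. apply sumR_ext. intros k Hk. apply RInt_scalR. apply ex_RInt_cont; auto. }
  assert (A1 : is_lim (fun T => p T - p 0) p_infty (0 - p 0)).
  { apply is_lim_minus'; auto. apply is_lim_const. }
  assert (A2 : is_lim (fun T => p T - p 0) p_infty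
                 (c1 * L1 + c2 * L2 + sumR n (fun k => beta k * Lk k))).
  { eapply is_lim_ext. { intros T; symmetry; apply Heq. }
    apply is_lim_plus'; [apply is_lim_plus'|].
    - apply (is_lim_scal_l _ c1 p_infty L1); auto.
    - apply (is_lim_scal_l _ c2 p_infty L2); auto.
    - apply (is_lim_sumR n (fun k T => beta k * RInt (H k) 0 T)). intros k Hk.
      apply (is_lim_scal_l _ (beta k) p_infty (Lk k)); auto. }
  apply is_lim_unique in A1. apply is_lim_unique in A2.
  rewrite A1 in A2. injection A2. intros; lra.
Qed.

Definition cf (s tau t : R) : R := exp (- s * t) * cos (tau * t).
Definition sf (s tau t : R) : R := - (exp (- s * t) * sin (tau * t)).

Definition LC (s tau : R) (e : R -> R) : R :=
  real (Lim (fun T => RInt (fun t => cf s tau t * e t) 0 T) p_infty).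
Definition LS (s tau : R) (e : R -> R) : R :=
  real (Lim (fun T => RInt (fun t => sf s tau t * e t) 0 T) p_infty).

Lemma cf_deriv s tau t : is_derive (cf s tau) t (- s * cf s tau t + tau * sf s tau t).
Proof. unfold cf, sf. auto_derive; auto. ring. Qed.
Lemma sf_deriv s tau t : is_derive (sf s tau) t (- s * sf s tau t - tau * cf s tau t).
Proof. unfold cf, sf. auto_derive; auto. ring. Qed.

Lemma cf_bound s tau t : Rabs (cf s tau t) <= exp (- s * t).
Proof.
  unfold cf. rewrite Rabs_mult, (Rabs_right (exp _)) by (apply Rle_ge, Rlt_le, exp_pos).
  pose proof (exp_pos (- s * t)). pose proof (COS_bound (tau * t)).
  assert (Rabs (cos (tau * t)) <= 1) by (apply Rabs_le; lra). nra.
Qed.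
Lemma sf_bound s tau t : Rabs (sf s tau t) <= exp (- s * t).
Proof.
  unfold sf. rewrite Rabs_Ropp, Rabs_mult, (Rabs_right (exp _)) by (apply Rle_ge, Rlt_le, exp_pos).
  pose proof (exp_pos (- s * t)). pose proof (SIN_bound (tau * t)).
  assert (Rabs (sin (tau * t)) <= 1) by (apply Rabs_le; lra). nra.
Qed.

Lemma weighted_bound (w e : R -> R) s t : Rabs (w t) <= exp (- s * t) -> Rabs (e t) <= 1 ->
  Rabs (w t * e t) <= exp (- s * t).
Proof.
  intros H1 H2. rewrite Rabs_mult. pose proof (Rabs_pos (w t)). pose proof (Rabs_pos (e t)). nra.
Qed.

Lemma LC_lim s tau e : 0 < s -> (forall t, continuous e t) ->
  (forall t, 0 <= t -> Rabs (e t) <= 1) ->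
  is_lim (fun T => RInt (fun t => cf s tau t * e t) 0 T) p_infty (LC s tau e).
Proof.
  intros Hs Hc Hb.
  destruct (lap_exists s (fun t => cf s tau t * e t) Hs) as [l Hl].
  - intros t. apply cont_mult; auto. eapply cont_of_derive; apply cf_deriv.
  - intros t Ht. apply weighted_bound; auto. apply cf_bound.
  - unfold LC. rewrite (is_lim_unique _ _ _ Hl). exact Hl.
Qed.

Lemma LS_lim s tau e : 0 < s -> (forall t, continuous e t) ->
  (forall t, 0 <= t -> Rabs (e t) <= 1) ->
  is_lim (fun T => RInt (fun t => sf s tau t * e t) 0 T) p_infty (LS s tau e).
Proof.
  intros Hs Hc Hb.
  destruct (lap_exists s (fun t => sf s tau t * e t) Hs) as [l Hl].
  - intros t. apply cont_mult; auto. eapply cont_of_derive; apply sf_deriv.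
  - intros t Ht. apply weighted_bound; auto. apply sf_bound.
  - unfold LS. rewrite (is_lim_unique _ _ _ Hl). exact Hl.
Qed.

Lemma lap_identity s tau (e : R -> R) (g : nat -> R -> R) (beta : nat -> R) (n : nat) :
  0 < s ->
  (forall t, is_derive e t (sumR n (fun k => beta k * g k t))) ->
  (forall t, continuous e t) ->
  (forall k, (k < n)%nat -> forall t, continuous (g k) t) ->
  (forall t, 0 <= t -> Rabs (e t) <= 1) ->
  (forall k, (k < n)%nat -> forall t, 0 <= t -> Rabs (g k t) <= 1) ->
  - e 0 = - s * LC s tau e + tau * LS s tau e + sumR n (fun k => beta k * LC s tau (g k)) /\
  0 = - s * LS s tau e - tau * LC s tau e + sumR n (fun k => beta k * LS s tau (g k)).
Proof.
  intros Hs Hd Hce Hcg Hbe Hbg.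
  assert (Hccf : forall t, continuous (cf s tau) t) by (intros; eapply cont_of_derive; apply cf_deriv).
  assert (Hcsf : forall t, continuous (sf s tau) t) by (intros; eapply cont_of_derive; apply sf_deriv).
  split.
  - replace (- e 0) with (- (cf s tau 0 * e 0)).
    2:{ unfold cf. rewrite !Rmult_0_r, exp_0, cos_0. ring. }
    apply (lapgen (fun t => cf s tau t * e t) (fun t => cf s tau t * e t) (fun t => sf s tau t * e t)
             (fun k t => cf s tau t * g k t)).
    + intros t. 
      replace (- s * (cf s tau t * e t) + tau * (sf s tau t * e t) +
               sumR n (fun k => beta k * (cf s tau t * g k t)))
        with ((- s * cf s tau t + tau * sf s tau t) * e t + cf s tau t * sumR n (fun k => beta k * g k t)).
      { apply is_derive_Rmult; [apply cf_deriv | apply Hd]. }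
      rewrite <- sumR_scal_l.
      rewrite (sumR_ext n (fun k => cf s tau t * (beta k * g k t)) (fun k => beta k * (cf s tau t * g k t))) by (intros; ring).
      ring.
    + intros; apply cont_mult; auto.
    + intros; apply cont_mult; auto.
    + intros; apply cont_mult; auto.
    + apply (lim_zero s); auto. intros; apply weighted_bound; auto; apply cf_bound.
    + apply LC_lim; auto.
    + apply LS_lim; auto.
    + intros k Hk. apply LC_lim; auto.
  - replace 0 with (- (sf s tau 0 * e 0)) at 1.
    2:{ unfold sf. rewrite !Rmult_0_r, sin_0. ring. }
    replace (- s * LS s tau e - tau * LC s tau e) with (- s * LS s tau e + - tau * LC s tau e) by ring.
    apply (lapgen (fun t => sf s tau t * e t) (fun t => sf s tau t * e t) (fun t => cf s tau t * e t)
             (fun k t => sf s tau t * g k t)).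
    + intros t. 
      replace (- s * (sf s tau t * e t) + - tau * (cf s tau t * e t) +
               sumR n (fun k => beta k * (sf s tau t * g k t)))
        with ((- s * sf s tau t - tau * cf s tau t) * e t + sf s tau t * sumR n (fun k => beta k * g k t)).
      { apply is_derive_Rmult; [apply sf_deriv | apply Hd]. }
      rewrite <- sumR_scal_l.
      rewrite (sumR_ext n (fun k => sf s tau t * (beta k * g k t)) (fun k => beta k * (sf s tau t * g k t))) by (intros; ring).
      ring.
    + intros; apply cont_mult; auto.
    + intros; apply cont_mult; auto.
    + intros; apply cont_mult; auto.
    + apply (lim_zero s); auto. intros; apply weighted_bound; auto; apply sf_bound.
    + apply LS_lim; auto.
    + apply LC_lim; auto.
    + intros k Hk. apply LS_lim; auto.
Qed.

Lemma Phat_eq N A w a b : ratem N A -> 0 < Re w -> (a < N)%nat -> (b < N)%nat ->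
  Phat N A w a b = (LC (Re w) (Im w) (fun t => expm N A t a b),
                    LS (Re w) (Im w) (fun t => expm N A t a b)).
Proof.
  intros HA Hs Ha Hb.
  set (e := fun t => expm N A t a b).
  assert (Hce : forall t, continuous e t) by (intros; apply expm_cont; auto).
  assert (Hbe : forall t, 0 <= t -> Rabs (e t) <= 1).
  { intros t Ht. pose proof (expm_bounds N A t a b HA Ha Hb Ht). unfold e. apply Rabs_le. lra. }
  assert (Hccf : forall t, continuous (cf (Re w) (Im w)) t) by (intros; eapply cont_of_derive; apply cf_deriv).
  assert (Hcsf : forall t, continuous (sf (Re w) (Im w)) t) by (intros; eapply cont_of_derive; apply sf_deriv).
  pose proof (LC_lim (Re w) (Im w) e Hs Hce Hbe) as H1.
  pose proof (LS_lim (Re w) (Im w) e Hs Hce Hbe) as H2.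
  unfold Phat. apply (is_RInt_gen_unique (V:=C_R_CompleteNormedModule) (Fa:=at_point 0) (Fb:=Rbar_locally p_infty)).
  intros P [eps Heps].
  destruct (H1 (fun x => ball (LC (Re w) (Im w) e) eps x) (locally_ball _ eps)) as [M1 HM1].
  destruct (H2 (fun x => ball (LS (Re w) (Im w) e) eps x) (locally_ball _ eps)) as [M2 HM2].
  apply Filter_prod with (Q := fun x => x = 0) (R := fun y => Rmax M1 M2 < y).
  - reflexivity.
  - exists (Rmax M1 M2). auto.
  - intros x y -> Hy. simpl.
    exists (RInt (fun t => cf (Re w) (Im w) t * e t) 0 y, RInt (fun t => sf (Re w) (Im w) t * e t) 0 y).
    split.
    + apply (is_RInt_fct_extend_pair (U:=R_NormedModule) (V:=R_NormedModule)).
      * eapply is_RInt_ext; [|apply (RInt_correct (V:=R_CompleteNormedModule)); apply ex_RInt_cont; intros; apply cont_mult; auto].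
        intros t _. unfold cexp_neg, Cmult, RtoC, cf, sf, e; simpl. ring.
      * eapply is_RInt_ext; [|apply (RInt_correct (V:=R_CompleteNormedModule)); apply ex_RInt_cont; intros; apply cont_mult; auto].
        intros t _. unfold cexp_neg, Cmult, RtoC, cf, sf, e; simpl. ring.
    + apply Heps. split.
      * apply HM1. eapply Rle_lt_trans; [apply Rmax_l|exact Hy].
      * apply HM2. eapply Rle_lt_trans; [apply Rmax_r|exact Hy].
Qed.

Lemma sumC_ext n f g : (forall k, (k < n)%nat -> f k = g k) -> sumC n f = sumC n g.
Proof.
  induction n; simpl; intros H; auto.
  rewrite IHn by (intros; apply H; lia). rewrite H by lia. auto.
Qed.

Lemma sumC_plus n f g : sumC n (fun k => Cplus (f k) (g k)) = Cplus (sumC n f) (sumC n g).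
Proof. induction n; simpl; [ring|]. rewrite IHn; ring. Qed.

Lemma sumC_minus n f g : sumC n (fun k => Cminus (f k) (g k)) = Cminus (sumC n f) (sumC n g).
Proof. induction n; simpl; [ring|]. rewrite IHn; ring. Qed.

Lemma sumC_scal_l n c f : sumC n (fun k => Cmult c (f k)) = Cmult c (sumC n f).
Proof. induction n; simpl; [ring|]. rewrite IHn; ring. Qed.

Lemma sumC_scal_r n c f : sumC n (fun k => Cmult (f k) c) = Cmult (sumC n f) c.
Proof. induction n; simpl; [ring|]. rewrite IHn; ring. Qed.

Lemma sumC_0 n : sumC n (fun _ => RtoC 0) = RtoC 0.
Proof. induction n; simpl; [ring|]. rewrite IHn; ring. Qed.

Lemma sumC_swap n m f :
  sumC n (fun k => sumC m (fun l => f k l)) = sumC m (fun l => sumC n (fun k => f k l)).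
Proof.
  induction n; simpl.
  - rewrite sumC_0; auto.
  - rewrite IHn, <- sumC_plus; auto.
Qed.

Lemma sumC_delta n a f : (a < n)%nat ->
  sumC n (fun k => if Nat.eqb k a then f k else RtoC 0) = f a.
Proof.
  induction n; intros Ha; [lia|]. simpl.
  destruct (Nat.eq_dec a n) as [->|Hne].
  - rewrite Nat.eqb_refl.
    rewrite (sumC_ext n _ (fun _ => RtoC 0)), sumC_0; [ring|].
    intros k Hk. destruct (Nat.eqb_spec k n); [lia|auto].
  - rewrite IHn by lia. destruct (Nat.eqb_spec n a); [lia|ring].
Qed.

Lemma sumC_pair n f g : sumC n (fun k => (f k, g k)) = (sumR n f, sumR n g).
Proof. induction n; simpl; auto. rewrite IHn. reflexivity. Qed.

Lemma Lid N A w a b : ratem N A -> 0 < Re w -> (a < N)%nat -> (b < N)%nat ->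
  Cminus (Cmult w (Phat N A w a b))
         (sumC N (fun k => Cmult (Phat N A w a k) (RtoC (A k b)))) = RtoC (mid a b).
Proof.
  intros HA Hs Ha Hb.
  destruct (lap_identity (Re w) (Im w) (fun t => expm N A t a b) (fun k t => expm N A t a k)
              (fun k => A k b) N Hs) as [I1 I2].
  - intros t. eapply is_derive_ext; [intros; reflexivity|].
    rewrite (sumR_ext N _ (fun k => expm N A t a k * A k b)) by (intros; ring).
    apply expm_deriv_r; auto.
  - intros; apply expm_cont; auto.
  - intros; apply expm_cont; auto.
  - intros t Ht. pose proof (expm_bounds N A t a b HA Ha Hb Ht). apply Rabs_le; lra.
  - intros k Hk t Ht. pose proof (expm_bounds N A t a k HA Ha Hk Ht). apply Rabs_le; lra.
  - rewrite expm_0 in I1.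
    rewrite (sumC_ext N _ (fun k => (A k b * LC (Re w) (Im w) (fun t => expm N A t a k),
                                     A k b * LS (Re w) (Im w) (fun t => expm N A t a k)))).
    2:{ intros k Hk. rewrite Phat_eq by auto. unfold Cmult, RtoC; simpl. f_equal; ring. }
    rewrite sumC_pair, Phat_eq by auto.
    destruct w as [sg tau]. unfold Re, Im in *; simpl in *.
    unfold Cminus, Cplus, Copp, Cmult, RtoC; simpl. f_equal; lra.
Qed.

Lemma Rid N A w a b : ratem N A -> 0 < Re w -> (a < N)%nat -> (b < N)%nat ->
  Cminus (Cmult w (Phat N A w a b))
         (sumC N (fun k => Cmult (RtoC (A a k)) (Phat N A w k b))) = RtoC (mid a b).
Proof.
  intros HA Hs Ha Hb.
  destruct (lap_identity (Re w) (Im w) (fun t => expm N A t a b) (fun k t => expm N A t k b)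
              (fun k => A a k) N Hs) as [I1 I2].
  - intros t. apply expm_deriv_l; auto.
  - intros; apply expm_cont; auto.
  - intros; apply expm_cont; auto.
  - intros t Ht. pose proof (expm_bounds N A t a b HA Ha Hb Ht). apply Rabs_le; lra.
  - intros k Hk t Ht. pose proof (expm_bounds N A t k b HA Hk Hb Ht). apply Rabs_le; lra.
  - rewrite expm_0 in I1.
    rewrite (sumC_ext N _ (fun k => (A a k * LC (Re w) (Im w) (fun t => expm N A t k b),
                                     A a k * LS (Re w) (Im w) (fun t => expm N A t k b)))).
    2:{ intros k Hk. rewrite Phat_eq by auto. unfold Cmult, RtoC; simpl. f_equal; ring. }
    rewrite sumC_pair, Phat_eq by auto.
    destruct w as [sg tau]. unfold Re, Im in *; simpl in *.
    unfold Cminus, Cplus, Copp, Cmult, RtoC; simpl. f_equal; lra.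
Qed.

Definition Dd (i j k l : nat) : R :=
  (if Nat.eqb k i && Nat.eqb l j then 1 else 0) - (if Nat.eqb k j && Nat.eqb l j then 1 else 0).

Lemma resolvent_alg N (Py Px : nat -> nat -> C) (Qy Qx : mat) (w : C) (i j : nat) (d : R) :
  (i < N)%nat -> (j < N)%nat -> i <> j ->
  (forall a l, (a < N)%nat -> (l < N)%nat ->
     Cminus (Cmult w (Py a l)) (sumC N (fun k => Cmult (Py a k) (RtoC (Qy k l)))) = RtoC (mid a l)) ->
  (forall k b, (k < N)%nat -> (b < N)%nat ->
     Cminus (Cmult w (Px k b)) (sumC N (fun l => Cmult (RtoC (Qx k l)) (Px l b))) = RtoC (mid k b)) ->
  (forall k l, (k < N)%nat -> (l < N)%nat -> Qy k l = Qx k l + d * Dd i j k l) ->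
  forall a b, (a < N)%nat -> (b < N)%nat ->
  Py a b = Cplus (Px a b) (Cmult (RtoC d) (Cmult (Cminus (Py a i) (Py a j)) (Px j b))).
Proof.
  intros Hi Hj Hij HL HR HQ a b Ha Hb.
  set (S := sumC N (fun k => Cmult (Py a k) (Px k b))).
  set (u := Cminus (Py a i) (Py a j)).
  assert (E1 : Py a b = sumC N (fun k => Cmult (Py a k) (RtoC (mid k b)))).
  { rewrite (sumC_ext N _ (fun k => if Nat.eqb k b then Py a k else RtoC 0)).
    - rewrite sumC_delta; auto.
    - intros k _. unfold mid. destruct (Nat.eqb k b); ring. }
  assert (E2 : sumC N (fun k => Cmult (Py a k) (RtoC (mid k b))) =
               Cminus (Cmult w S)
                 (sumC N (fun l => Cmult (sumC N (fun k => Cmult (Py a k) (RtoC (Qx k l)))) (Px l b)))).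
  { rewrite (sumC_ext N _ (fun k => Cminus (Cmult w (Cmult (Py a k) (Px k b)))
                  (sumC N (fun l => Cmult (Py a k) (Cmult (RtoC (Qx k l)) (Px l b)))))).
    2:{ intros k Hk. rewrite <- (HR k b Hk Hb). rewrite sumC_scal_l. ring. }
    rewrite sumC_minus, sumC_scal_l, sumC_swap. unfold S. f_equal.
    apply sumC_ext. intros l Hl. rewrite <- sumC_scal_r. apply sumC_ext. intros; ring. }
  assert (E3 : forall l, (l < N)%nat ->
            sumC N (fun k => Cmult (Py a k) (RtoC (Qx k l))) =
            Cminus (Cminus (Cmult w (Py a l)) (RtoC (mid a l)))
                   (Cmult (RtoC d) (if Nat.eqb l j then u else RtoC 0))).
  { intros l Hl.
    rewrite (sumC_ext N _ (fun k => Cminus (Cmult (Py a k) (RtoC (Qy k l)))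
                                    (Cmult (RtoC d) (Cmult (Py a k) (RtoC (Dd i j k l)))))).
    2:{ intros k Hk. rewrite (HQ k l Hk Hl). rewrite RtoC_plus, RtoC_mult. ring. }
    rewrite sumC_minus, sumC_scal_l, <- (HL a l Ha Hl).
    assert (HD : sumC N (fun k => Cmult (Py a k) (RtoC (Dd i j k l))) =
                 (if Nat.eqb l j then u else RtoC 0)).
    { unfold Dd. destruct (Nat.eqb l j).
      - rewrite (sumC_ext N _ (fun k => Cminus (if Nat.eqb k i then Py a k else RtoC 0)
                                             (if Nat.eqb k j then Py a k else RtoC 0))).
        + rewrite sumC_minus, !sumC_delta; auto.
        + intros k _. rewrite !andb_true_r. unfold RtoC.
          destruct (Nat.eqb k i), (Nat.eqb k j); unfold Cminus, Cplus, Copp, Cmult; simpl;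
            f_equal; ring.
      - rewrite (sumC_ext N _ (fun _ => RtoC 0)); [apply sumC_0|].
        intros k _. rewrite !andb_false_r. unfold RtoC, Cmult; simpl; f_equal; ring. }
    rewrite HD. ring. }
  assert (E4 : sumC N (fun l => Cmult (sumC N (fun k => Cmult (Py a k) (RtoC (Qx k l)))) (Px l b)) =
               Cminus (Cminus (Cmult w S) (Px a b)) (Cmult (RtoC d) (Cmult u (Px j b)))).
  { rewrite (sumC_ext N _ (fun l => Cminus (Cminus (Cmult w (Cmult (Py a l) (Px l b)))
                                              (if Nat.eqb l a then Px l b else RtoC 0))
                                      (if Nat.eqb l j then Cmult (RtoC d) (Cmult u (Px l b)) else RtoC 0))).
    2:{ intros l Hl. rewrite (E3 l Hl). unfold mid. rewrite (Nat.eqb_sym a l).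
        destruct (Nat.eqb l a), (Nat.eqb l j); ring. }
    rewrite !sumC_minus, !sumC_delta by auto. rewrite sumC_scal_l. fold S. auto. }
  rewrite E1, E2, E4. fold u. ring.
Qed.

Lemma Q_ratem N r0 i j y :
  (forall a b, (a < N)%nat -> (b < N)%nat -> a <> b -> 0 <= r0 a b) -> 0 <= y ->
  ratem N (rate_matrix N (offrate r0 i j y)).
Proof.
  intros Hr Hy. split.
  - intros a b Ha Hb Hab. unfold rate_matrix.
    destruct (Nat.eqb_spec a b); [contradiction|].
    unfold offrate. destruct (Nat.eqb a i && Nat.eqb b j); auto.
  - intros b Hb. unfold rate_matrix.
    set (S := sumR N (fun c => if Nat.eqb c b then 0 else offrate r0 i j y c b)).
    rewrite (sumR_ext N _ (fun a => (if Nat.eqb a b then 0 else offrate r0 i j y a b) +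
                                    (if Nat.eqb a b then - S else 0))).
    + rewrite sumR_plus, (sumR_delta N b (fun _ => - S)) by auto. fold S. ring.
    + intros a _. destruct (Nat.eqb a b); ring.
Qed.

Lemma Q_colsum_diff N r0 i j x y k : (i < N)%nat -> i <> j ->
  sumR N (fun c => if Nat.eqb c k then 0 else offrate r0 i j y c k) =
  sumR N (fun c => if Nat.eqb c k then 0 else offrate r0 i j x c k) + (if Nat.eqb k j then y - x else 0).
Proof.
  intros Hi Hij.
  rewrite (sumR_ext N _ (fun c => (if Nat.eqb c k then 0 else offrate r0 i j x c k) +
                                  (if Nat.eqb c i && Nat.eqb k j then y - x else 0))).
  - rewrite sumR_plus. f_equal. destruct (Nat.eqb k j).
    + rewrite (sumR_ext N _ (fun c => if Nat.eqb c i then y - x else 0)).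
      * apply (sumR_delta N i (fun _ => y - x)); auto.
      * intros c _. rewrite andb_true_r. auto.
    + rewrite (sumR_ext N _ (fun _ => 0)); [apply sumR_0|]. intros c _. rewrite andb_false_r; auto.
  - intros c _. unfold offrate.
    destruct (Nat.eqb_spec c k); destruct (Nat.eqb_spec c i); destruct (Nat.eqb_spec k j);
      simpl; subst; try ring; try lia.
Qed.

Lemma Q_diff N r0 i j x y k l : (i < N)%nat -> (j < N)%nat -> i <> j ->
  (k < N)%nat -> (l < N)%nat ->
  rate_matrix N (offrate r0 i j y) k l = rate_matrix N (offrate r0 i j x) k l + (y - x) * Dd i j k l.
Proof.
  intros Hi Hj Hij Hk Hl. unfold rate_matrix, Dd.
  destruct (Nat.eqb_spec k l) as [<-|Hkl].
  - rewrite (Q_colsum_diff N r0 i j x y k Hi Hij).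
    destruct (Nat.eqb_spec k j); destruct (Nat.eqb_spec k i); simpl; subst; try lia; ring.
  - unfold offrate.
    destruct (Nat.eqb_spec k i); destruct (Nat.eqb_spec l j); destruct (Nat.eqb_spec k j);
      simpl; subst; try lia; ring.
Qed.

Lemma response_scale N r0 i j a b w x y :
  (i < N)%nat -> (j < N)%nat -> i <> j ->
  (forall a b, (a < N)%nat -> (b < N)%nat -> a <> b -> 0 <= r0 a b) ->
  0 <= x -> 0 <= y -> 0 < Re w ->
  Cmult (response N r0 i j a b w y)
        (Cminus (RtoC 1) (Cmult (RtoC (y - x))
           (Cminus (Phat N (rate_matrix N (offrate r0 i j x)) w j i)
                   (Phat N (rate_matrix N (offrate r0 i j x)) w j j))))
  = response N r0 i j a b w x.
Proof.
  intros Hi Hj Hij Hr Hx Hy Hs.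
  set (Qx := rate_matrix N (offrate r0 i j x)).
  set (Qy := rate_matrix N (offrate r0 i j y)).
  assert (Hres := resolvent_alg N (fun a b => Phat N Qy w a b) (fun a b => Phat N Qx w a b)
                    Qy Qx w i j (y - x) Hi Hj Hij).
  assert (Hres' : forall a b, (a < N)%nat -> (b < N)%nat ->
     Phat N Qy w a b = Cplus (Phat N Qx w a b) (Cmult (RtoC (y - x))
        (Cmult (Cminus (Phat N Qy w a i) (Phat N Qy w a j)) (Phat N Qx w j b)))).
  { apply Hres.
    - intros; apply Lid; auto. apply Q_ratem; auto.
    - intros; apply Rid; auto. apply Q_ratem; auto.
    - intros; apply Q_diff; auto. }
  unfold response. rewrite <- sumC_scal_r. fold Qx Qy.
  apply sumC_ext. intros l Hl.
  pose proof (Hres' l i Hl Hi) as H1. pose proof (Hres' l j Hl Hj) as H2.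
  remember (Cminus (Phat N Qy w l i) (Phat N Qy w l j)) as U eqn:HU.
  rewrite H1, H2 in HU.
  assert (K : Cminus U (Cmult (RtoC (y - x)) (Cmult U (Cminus (Phat N Qx w j i) (Phat N Qx w j j))))
              = Cminus (Phat N Qx w l i) (Phat N Qx w l j)).
  { rewrite HU at 1. ring. }
  rewrite <- K. ring.
Qed.

Lemma C_nonzero (d : R) (z : C) : Rabs (d * fst z) < 1 ->
  Cminus (RtoC 1) (Cmult (RtoC d) z) <> RtoC 0.
Proof.
  intros Hb HD. apply (f_equal fst) in HD. destruct z as [z1 z2].
  unfold Cminus, Cplus, Copp, Cmult, RtoC in HD. simpl in HD, Hb.
  apply Rabs_def2 in Hb. lra.
Qed.

Theorem theorem3 (N : nat) (r0 : mat) (i j : nat)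
  (a1 a2 : nat -> R) (b1 b2 : mat) (w : C) (x : R) :
  (i < N)%nat -> (j < N)%nat -> i <> j ->
  (forall a b, (a < N)%nat -> (b < N)%nat -> a <> b -> 0 <= r0 a b) ->
  0 < x ->
  irreducible N (rate_matrix N (offrate r0 i j x)) ->
  0 < Re w ->
  response N r0 i j a2 b2 w x <> RtoC 0 ->
  is_derive (fun y => chi_hat N r0 i j a1 a2 b1 b2 w y) x (RtoC 0).
Proof.
  intros Hi Hj Hij Hr Hx _ Hs Hnz.
  set (s := Cminus (Phat N (rate_matrix N (offrate r0 i j x)) w j i)
                   (Phat N (rate_matrix N (offrate r0 i j x)) w j j)).
  assert (Heps : 0 < Rmin x (/ (2 * (Rabs (fst s) + 1)))).
  { apply Rmin_pos; auto. apply Rinv_0_lt_compat. pose proof (Rabs_pos (fst s)). lra. }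
  apply (is_derive_ext_loc (K:=R_AbsRing) (V:=C_R_NormedModule) (fun _ => chi_hat N r0 i j a1 a2 b1 b2 w x)).
  2:{ exact (is_derive_const (K:=R_AbsRing) (V:=C_R_NormedModule) _ x). }
  exists (mkposreal _ Heps). intros y Hy.
  change (Rabs (y - x) < Rmin x (/ (2 * (Rabs (fst s) + 1)))) in Hy.
  assert (Hy1 : Rabs (y - x) < x) by (eapply Rlt_le_trans; [exact Hy|apply Rmin_l]).
  assert (Hy2 : Rabs (y - x) < / (2 * (Rabs (fst s) + 1))) by (eapply Rlt_le_trans; [exact Hy|apply Rmin_r]).
  assert (Hypos : 0 <= y) by (apply Rabs_def2 in Hy1; lra).
  set (D := Cminus (RtoC 1) (Cmult (RtoC (y - x)) s)).
  assert (HD : D <> RtoC 0).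
  { apply C_nonzero.
    rewrite Rabs_mult.
    assert (Hp : 0 < 2 * (Rabs (fst s) + 1)) by (pose proof (Rabs_pos (fst s)); lra).
    apply Rmult_lt_compat_r with (r := 2 * (Rabs (fst s) + 1)) in Hy2; auto.
    rewrite Rinv_l in Hy2 by lra.
    pose proof (Rabs_pos (y - x)). pose proof (Rabs_pos (fst s)). nra. }
  pose proof (response_scale N r0 i j a1 b1 w x y Hi Hj Hij Hr (Rlt_le _ _ Hx) Hypos Hs) as R1.
  pose proof (response_scale N r0 i j a2 b2 w x y Hi Hj Hij Hr (Rlt_le _ _ Hx) Hypos Hs) as R2.
  fold s in R1, R2. fold D in R1, R2.
  unfold chi_hat. rewrite <- R1, <- R2.
  assert (Hr2 : response N r0 i j a2 b2 w y <> RtoC 0).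
  { intros H0. apply Hnz. rewrite <- R2, H0. ring. }
  clearbody D. match goal with |- ?a = ?b => change (@eq C a b) end. field. split; auto.
Qed.
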